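(* Let $X$ be a finite set with $|X|\ge5$, $k$ an integer with $5<k<|X|-5$, $\mathfrak{C}$ a nonempty symmetric family of choice functions for $\binom{X}{k}$, $\mathcal{F}$ the set of simple averaging functions for $\mathfrak{C}$, and assume $r(\mathcal{F})=2$. Let $a_1,a_2,a_3\in X$ be pairwise distinct. Then there is $g\in\mathcal{F}_{[3]}$ such that $g(\bar b)=b_1$ for every $\bar b\in X^3$ with a repetition, and $g(a_1,a_2,a_3)=a_2$.
   Context: $\binom{X}{k}=\{Y\subseteq X:|Y|=k\}$; choice functions satisfy $c(Y)\in Y$. Symmetric: closed under $c\mapsto\pi*c$, $(\pi*c)(Y)=\pi^{-1}(c(\pi(Y)))$. $\mathcal{F}_{[r]}$: functions $f:X^r\to X$ with $f(a,\dots,a)=a$ such that for all $c_1,\dots,c_r\in\mathfrak{C}$, $Y\mapsto f(c_1(Y),\dots,c_r(Y))$ is in $\mathfrak{C}$. A monarchy is a projection. $r(\mathcal{F})=\min\{r:\text{some } f\in\mathcal{F}_{[r]}\text{ is not a monarchy}\}$. *)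

(* Defs.v *)
From HB Require Import structures.
From mathcomp Require Import all_boot all_fingroup.
Set Implicit Arguments. Unset Strict Implicit. Unset Printing Implicit Defensive.

Section ChoiceDefs.
Variables (X : finType) (k : nat).

Definition ksub := {Y : {set X} | #|Y| == k}.

Definition cfun := {ffun ksub -> X}.

Definition is_choice_fun (c : cfun) : Prop := forall Y : ksub, c Y \in val Y.

(* pi(Y) as a k-subset (insubd default never used since pi is injective). *)
Definition perm_ksub (pi : {perm X}) (Y : ksub) : ksub :=
  insubd Y (pi @: val Y).

Definition perm_act (pi : {perm X}) (c : cfun) : cfun :=
  [ffun Y => (pi^-1)%g (c (perm_ksub pi Y))].

Definition symmetric_family (C : {set cfun}) : Prop :=
  forall pi c, c \in C -> perm_act pi c \in C.

Definition in_F (C : {set cfun}) (r : nat) (f : {ffun 'I_r -> X} -> X) : Prop :=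
  (forall a : X, f [ffun _ => a] = a) /\
  (forall cs : 'I_r -> cfun, (forall i, cs i \in C) ->
     [ffun Y => f [ffun i => cs i Y]] \in C).

Definition monarchy (r : nat) (f : {ffun 'I_r -> X} -> X) : Prop :=
  exists i : 'I_r, forall b, f b = b i.

Definition rF_eq (C : {set cfun}) (n : nat) : Prop :=
  (exists f : {ffun 'I_n -> X} -> X, in_F C f /\ ~ monarchy f) /\
  (forall m, m < n -> forall f : {ffun 'I_m -> X} -> X, in_F C f -> monarchy f).

End ChoiceDefs.

(* Main.v *)
From Stdlib Require Import Classical ClassicalEpsilon.
Require Import Defs.
From mathcomp Require Import all_boot all_fingroup.
From mathcomp Require Import zify.
Local Open Scope group_scope.
Set Implicit Arguments. Unset Strict Implicit. Unset Printing Implicit Defensive.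

Lemma perm_ksub_val (X : finType) (k : nat) (pi : {perm X}) (Y : ksub X k) :
  val (perm_ksub pi Y) = pi @: val Y.
Proof.
rewrite /perm_ksub val_insubd card_imset; last exact: perm_inj.
by rewrite (valP Y).
Qed.

Lemma perm_ksubK (X : finType) (k : nat) (pi : {perm X}) (Y : ksub X k) :
  perm_ksub pi^-1 (perm_ksub pi Y) = Y.
Proof.
apply: val_inj; rewrite !perm_ksub_val -imset_comp.
rewrite (eq_imset (g := id)) ?imset_id // => x /=; by rewrite permK.
Qed.

Definition good2 (X : finType) (k : nat) (C : {set cfun X k}) (h : X -> X -> X) :=
  (forall a, h a a = a) /\
  forall c1 c2, c1 \in C -> c2 \in C -> [ffun Y => h (c1 Y) (c2 Y)] \in C.

Lemma good2_ext X k (C : {set cfun X k}) h h' :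
  (forall x y, h x y = h' x y) -> good2 C h -> good2 C h'.
Proof.
move=> E [H1 H2]; split=> [a|c1 c2 P1 P2]; first by rewrite -E.
have -> : [ffun Y => h' (c1 Y) (c2 Y)] = [ffun Y => h (c1 Y) (c2 Y)].
  by apply/ffunP => Y; rewrite !ffunE E.
exact: H2.
Qed.

Lemma good2_comp X k (C : {set cfun X k}) h1 h2 :
  good2 C h1 -> good2 C h2 -> good2 C (fun x y => h1 x (h2 x y)).
Proof.
move=> [A1 B1] [A2 B2]; split=> [a|c1 c2 P1 P2]; first by rewrite A2 A1.
have -> : [ffun Y => h1 (c1 Y) (h2 (c1 Y) (c2 Y))] =
   [ffun Y => h1 (c1 Y) ([ffun Y => h2 (c1 Y) (c2 Y)] Y)].
  by apply/ffunP => Y; rewrite !ffunE.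
by apply: B1 => //; apply: B2.
Qed.

Lemma good2_swap X k (C : {set cfun X k}) h :
  good2 C h -> good2 C (fun x y => h y x).
Proof. by move=> [A B]; split=> // c1 c2 P1 P2; apply: B. Qed.

Lemma good2_proj2 X k (C : {set cfun X k}) : good2 C (fun x y => y).
Proof.
split=> // c1 c2 _ P2.
suff -> : [ffun Y => c2 Y] = c2 by [].
by apply/ffunP => Y; rewrite ffunE.
Qed.

Lemma good2_conj X k (C : {set cfun X k}) (hsym : symmetric_family C) h (pi : {perm X}) :
  good2 C h -> good2 C (fun x y => pi^-1 (h (pi x) (pi y))).
Proof.
move=> [A B]; split=> [a|c1 c2 P1 P2]; first by rewrite A permK.
have Q1 := hsym pi^-1 _ P1; have Q2 := hsym pi^-1 _ P2.
have R := hsym pi _ (B _ _ Q1 Q2).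
suff <- : perm_act pi [ffun Y => h (perm_act pi^-1 c1 Y) (perm_act pi^-1 c2 Y)] =
  [ffun Y => pi^-1 (h (pi (c1 Y)) (pi (c2 Y)))] by [].
apply/ffunP => Y; rewrite /perm_act !ffunE invgK.
by rewrite perm_ksubK.
Qed.

Definition opD (X : finType) (D : {set X * X}) (x y : X) : X :=
  if (x, y) \in D then y else x.

Definition inL X k (C : {set cfun X k}) (D : {set X * X}) := good2 C (opD D).

Lemma inL_setI X k (C : {set cfun X k}) D1 D2 :
  inL C D1 -> inL C D2 -> inL C (D1 :&: D2).
Proof.
move=> H1 H2; apply: good2_ext (good2_comp H1 H2) => x y.
rewrite /opD inE; case: ((x, y) \in D2); rewrite ?andbT ?andbF //.
by case: ((x, x) \in D1).
Qed.

Definition Rset (X : finType) (D : {set X * X}) : {set X * X} :=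
  [set t | (t.2, t.1) \notin D].

Lemma inL_R X k (C : {set cfun X k}) D : inL C D -> inL C (Rset D).
Proof.
move=> H; apply: good2_ext (good2_swap H) => x y.
by rewrite /opD inE /=; case: ((y, x) \in D).
Qed.

Lemma RsetK (X : finType) (D : {set X * X}) : Rset (Rset D) = D.
Proof. by apply/setP => -[x y]; rewrite !inE /= negbK. Qed.

Lemma inL_setU X k (C : {set cfun X k}) D1 D2 :
  inL C D1 -> inL C D2 -> inL C (D1 :|: D2).
Proof.
move=> H1 H2.
have -> : D1 :|: D2 = Rset (Rset D1 :&: Rset D2).
  by apply/setP => -[x y]; rewrite !inE /= negb_and !negbK.
by apply/inL_R/inL_setI; apply: inL_R.
Qed.

Definition conjset (X : finType) (pi : {perm X}) (D : {set X * X}) : {set X * X} :=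
  [set t | (pi t.1, pi t.2) \in D].

Lemma inL_conj X k (C : {set cfun X k}) (hsym : symmetric_family C) pi D :
  inL C D -> inL C (conjset pi D).
Proof.
move=> H; apply: good2_ext (good2_conj hsym pi H) => x y.
by rewrite /opD inE /=; case: ((pi x, pi y) \in D); rewrite permK.
Qed.

Lemma inL_setT X k (C : {set cfun X k}) : inL C setT.
Proof. by apply: good2_ext (good2_proj2 C) => x y; rewrite /opD inE. Qed.

Definition decP (P : Prop) : bool := if excluded_middle_informative P then true else false.
Lemma decPP (P : Prop) : decP P = true <-> P.
Proof. by rewrite /decP; case: excluded_middle_informative. Qed.

Definition LF X k (C : {set cfun X k}) : {set {set X * X}} := [set D | decP (inL C D)].

Definition At X k (C : {set cfun X k}) (t : X * X) : {set X * X} :=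
  \bigcap_(D in LF C | t \in D) D.

Lemma inL_At X k (C : {set cfun X k}) t : inL C (At C t).
Proof.
rewrite /At; apply: (big_ind (inL C)); [exact: inL_setT| exact: inL_setI|].
by move=> D /andP[]; rewrite inE => /decPP.
Qed.

Definition le X k (C : {set cfun X k}) (t s : X * X) :=
  forall D, inL C D -> t \in D -> s \in D.

Lemma At_le X k (C : {set cfun X k}) t s : s \in At C t <-> le C t s.
Proof.
split.
  by move=> /bigcapP H D HD tD; apply: H; rewrite tD andbT inE; apply/decPP.
move=> H; apply/bigcapP => D /andP[]; rewrite inE => /decPP; exact: H.
Qed.

Lemma le_refl X k (C : {set cfun X k}) t : le C t t.
Proof. by []. Qed.

Lemma le_trans X k (C : {set cfun X k}) t s r : le C t s -> le C s r -> le C t r.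
Proof. by move=> H1 H2 D HD tD; apply: H2 => //; apply: H1. Qed.

Lemma le_rev X k (C : {set cfun X k}) t s :
  le C t s -> le C (s.2, s.1) (t.2, t.1).
Proof.
move=> H D HD sD; apply/negPn/negP => tD.
have : t \in Rset D by rewrite inE.
by move/(H _ (inL_R HD)); rewrite inE /= sD.
Qed.

Lemma le_conj X k (C : {set cfun X k}) (hsym : symmetric_family C) (pi : {perm X}) t s :
  le C t s -> le C (pi t.1, pi t.2) (pi s.1, pi s.2).
Proof.
move=> H D HD tD.
have := H _ (inL_conj hsym pi HD); rewrite !inE /=.
by apply.
Qed.

Lemma perm_ext (X : finType) (xs ys : seq X) :
  uniq xs -> uniq ys -> size xs = size ys -> exists pi : {perm X}, map pi xs = ys.
Proof.
elim: xs ys => [|x xs IH] [|y ys] //=; first by move=> *; exists 1.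
move=> /andP[xxs uxs] /andP[yys uys] [sz].
have [p Hp] := IH _ uxs uys sz.
exists (p * tperm (p x) y); rewrite /= permM tpermL; congr cons.
rewrite -Hp; apply/eq_in_map => z zxs /=.
rewrite permM tpermD //.
  by apply/eqP => /perm_inj E; rewrite E zxs in xxs.
by apply/eqP => E; move: yys; rewrite E -Hp map_f.
Qed.

Lemma fresh (X : finType) (s : seq X) : size s < #|X| -> exists z, z \notin s.
Proof.
move=> H; apply/not_all_not_ex => Hn.
have : #|X| <= size s.
  apply: leq_trans (card_size s); apply: subset_leq_card.
  by apply/subsetP => z _; move: (Hn z); case: (z \in s).
by rewrite leqNgt H.
Qed.

Ltac neqs := rewrite /= ?inE ?negb_or ?andbT;
  repeat match goal with |- is_true (_ && _) => apply/andP; split end;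
  try (by []); try (by rewrite eq_sym).

Lemma fresh6 (X : finType) (s : seq X) : 6 <= #|X| -> size s < 6 -> exists z, z \notin s.
Proof. by move=> hn hs; apply: fresh; apply: leq_trans hn. Qed.

Lemma stepA X k (C : {set cfun X k}) (hsym : symmetric_family C) (hn : 6 <= #|X|)
  u v p q : u != v -> p != q -> le C (u,v) (p,q) -> (p,q) != (u,v) -> (p,q) != (v,u) ->
  exists e1 e2, [/\ e1 != e2, e1 != u, e1 != v, e2 != u & e2 != v] /\ le C (u,v) (e1,e2).
Proof.
move=> uv pq H n1 n2.
have [pu|pu] := eqVneq p u.
  subst p.
  have qv : q != v by apply: contraNneq n1 => ->.
  have qu : q != u by rewrite eq_sym.
  have [z] := @fresh6 X [:: u; v; q] hn erefl; rewrite !inE !negb_or => /and3P[zu zv zq].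
  have H' := le_rev H; rewrite /= in H'.
  have [pi] := @perm_ext X [:: q; u; v] [:: u; q; z] ltac:(neqs) ltac:(neqs) erefl.
  case=> E1 E2 E3.
  have := le_conj hsym (pi:=pi) H'; rewrite /= E1 E2 E3 => H2.
  exists z, q; split; first by neqs.
  exact: le_trans H H2.
have [pv|pv] := eqVneq p v.
  subst p.
  have qu : q != u by apply: contraNneq n2 => ->.
  have qv : q != v by rewrite eq_sym.
  have [z] := @fresh6 X [:: u; v; q] hn erefl; rewrite !inE !negb_or => /and3P[zu zv zq].
  have [pi] := @perm_ext X [:: u; v; q] [:: v; q; z] ltac:(neqs) ltac:(neqs) erefl.
  case=> E1 E2 E3.
  have := le_conj hsym (pi:=pi) H; rewrite /= E1 E2 E3 => H2.
  exists q, z; split; first by neqs.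
  exact: le_trans H H2.
have [qu|qu] := eqVneq q u.
  subst q.
  have [z] := @fresh6 X [:: u; v; p] hn erefl; rewrite !inE !negb_or => /and3P[zu zv zp].
  have [pi] := @perm_ext X [:: u; v; p] [:: p; u; z] ltac:(neqs) ltac:(neqs) erefl.
  case=> E1 E2 E3.
  have := le_conj hsym (pi:=pi) H; rewrite /= E1 E2 E3 => H2.
  exists z, p; split; first by neqs.
  exact: le_trans H H2.
have [qv|qv] := eqVneq q v.
  subst q.
  have [z] := @fresh6 X [:: u; v; p] hn erefl; rewrite !inE !negb_or => /and3P[zu zv zp].
  have H' := le_rev H; rewrite /= in H'.
  have [pi] := @perm_ext X [:: v; p; u] [:: p; v; z] ltac:(neqs) ltac:(neqs) erefl.
  case=> E1 E2 E3.
  have := le_conj hsym (pi:=pi) H'; rewrite /= E1 E2 E3 => H2.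
  exists p, z; split; first by neqs.
  exact: le_trans H H2.
by exists p, q; split.
Qed.

Lemma collapse X k (C : {set cfun X k}) (hsym : symmetric_family C) (hn : 6 <= #|X|)
  u v p q : u != v -> p != q -> le C (u,v) (p,q) -> (p,q) != (u,v) -> (p,q) != (v,u) ->
  forall a b c d, a != b -> c != d -> le C (a,b) (c,d).
Proof.
move=> uv pq H n1 n2 a b c d ab cd.
have [e1 [e2 [[e12 e1u e1v e2u e2v] He]]] := stepA hsym hn uv pq H n1 n2.
have [z] := @fresh6 X [:: a; b; c; d] hn erefl; rewrite !inE !negb_or => /and4P[za zb zc zd].
have [w] := @fresh6 X [:: a; b; c; d; z] hn erefl; rewrite !inE !negb_or => /and5P[wa wb wc wd wz].
have [pi] := @perm_ext X [:: u; v; e1; e2] [:: a; b; z; w] ltac:(neqs) ltac:(neqs) erefl.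
case=> E1 E2 E3 E4.
have := le_conj hsym (pi:=pi) He; rewrite /= E1 E2 E3 E4 => H1.
have [pi'] := @perm_ext X [:: u; v; e1; e2] [:: z; w; c; d] ltac:(neqs) ltac:(neqs) erefl.
case=> F1 F2 F3 F4.
have := le_conj hsym (pi:=pi') He; rewrite /= F1 F2 F3 F4 => H2.
exact: le_trans H1 H2.
Qed.

Lemma ex_ksub (X : finType) k (A B : {set X}) : A \subset B -> #|A| <= k -> k <= #|B| ->
  exists Y : {set X}, [/\ A \subset Y, Y \subset B & #|Y| = k].
Proof.
move: {2}#|B| (erefl #|B|) => n; elim: n B => [|n IH] B HB AB Ak kB.
  by exists B; split => //; apply/eqP; rewrite eqn_leq kB HB.
have [->|kn] := eqVneq k #|B|; first by exists B.
have ltk : k < #|B| by rewrite ltn_neqAle kn kB.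
have /subsetPn [b bB bA] : ~~ (B \subset A).
  by apply/negP => /subset_leq_card BA; move: (leq_trans BA Ak); rewrite leqNgt ltk.
have HB' : #|B :\ b| = n by move: HB; rewrite (cardsD1 b B) bB add1n => -[].
have AB' : A \subset B :\ b.
  apply/subsetP => x xA; rewrite !inE (subsetP AB) // andbT.
  by apply: contraNneq bA => <-.
have kB' : k <= #|B :\ b| by rewrite HB'; move: ltk; rewrite HB.
have [Y [AY YB cY]] := IH (B :\ b) HB' AB' Ak kB'.
exists Y; split => //; apply: subset_trans YB _; exact: subsetDl.
Qed.

Lemma tperm_imset (X : finType) (x u : X) (A : {set X}) : x \in A -> u \in A ->
  tperm x u @: A = A.
Proof.
move=> xA uA; apply/eqP; rewrite eqEcard card_imset ?leqnn ?andbT; last exact: perm_inj.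
apply/subsetP => z /imsetP [y yA ->]; by case: tpermP => // ->.
Qed.

Lemma ex_c X k (C : {set cfun X k}) (hC : forall c, c \in C -> is_choice_fun c)
  (hCne : C != set0) (hsym : symmetric_family C) (Y : ksub X k) x :
  x \in val Y -> exists2 c, c \in C & c Y = x.
Proof.
move=> xY; have [c0 c0C] := set0Pn _ hCne.
set u := c0 Y; have uY : u \in val Y := hC _ c0C Y.
exists (perm_act (tperm x u) c0); first exact: hsym.
have E : perm_ksub (tperm x u) Y = Y.
  by apply: val_inj; rewrite perm_ksub_val tperm_imset.
by rewrite /perm_act ffunE E tpermV tpermR.
Qed.

Lemma good2_cons X k (C : {set cfun X k}) (hC : forall c, c \in C -> is_choice_fun c)
  (hCne : C != set0) (hsym : symmetric_family C) (hk2 : 2 <= k) (hkX : k < #|X|) h :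
  good2 C h -> forall x y, h x y = x \/ h x y = y.
Proof.
move=> [A B] x y; apply: NNPP => Hn.
set z := h x y.
have zx : z != x by apply/eqP => E; apply: Hn; left.
have zy : z != y by apply/eqP => E; apply: Hn; right.
have s1 : [set x; y] \subset [set~ z].
  by apply/subsetP => w; rewrite !inE => /orP[]/eqP->; rewrite eq_sym.
have s2 : #|[set x; y]| <= k.
  by apply: leq_trans hk2; rewrite cards2; case: (x != y).
have s3 : k <= #|[set~ z]|.
  by rewrite cardsC1 -ltnS prednK // (leq_ltn_trans _ hkX).
have [Y0 [AY YB cY]] := ex_ksub s1 s2 s3.
pose Y : ksub X k := exist _ Y0 (introT eqP cY).
have [c1 c1C c1Y] := ex_c hC hCne hsym (x:=x) (Y:=Y) (subsetP AY _ (set21 _ _)).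
have [c2 c2C c2Y] := ex_c hC hCne hsym (x:=y) (Y:=Y) (subsetP AY _ (set22 _ _)).
have := hC _ (B _ _ c1C c2C) Y; rewrite ffunE c1Y c2Y -/z /= => zY.
by move: (subsetP YB _ zY); rewrite !inE eqxx.
Qed.


Lemma le_only X k (C : {set cfun X k}) (hC : forall c, c \in C -> is_choice_fun c)
  (hCne : C != set0) (hsym : symmetric_family C) (hk2 : 2 <= k) (hkX : k < #|X|)
  (hn : 6 <= #|X|) hf (Hf : good2 C hf) x0 y0 x1 y1 :
  hf x0 y0 != x0 -> hf x1 y1 != y1 ->
  forall u v p q, u != v -> p != q -> le C (u,v) (p,q) -> (p,q) = (u,v) \/ (p,q) = (v,u).
Proof.
move=> n0 n1 u v p q uv pq H.
have cons := good2_cons hC hCne hsym hk2 hkX Hf.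
have x0y0 : x0 != y0 by apply: contraNneq n0 => <-; rewrite Hf.1.
have x1y1 : x1 != y1 by apply: contraNneq n1 => ->; rewrite Hf.1.
apply: NNPP => Hn.
have m1 : (p, q) != (u, v) by apply/eqP => E; apply: Hn; left.
have m2 : (p, q) != (v, u) by apply/eqP => E; apply: Hn; right.
have L := collapse hsym hn uv pq H m1 m2 x0y0 x1y1.
pose Df := [set t : X * X | hf t.1 t.2 == t.2].
have HD : inL C Df.
  apply: good2_ext Hf => x y; rewrite /opD inE /=.
  case: (eqVneq (hf x y) y) => // ne; case: (cons x y) => // E.
  by rewrite E eqxx in ne.
have : (x0, y0) \in Df.
  rewrite inE /=; case: (cons x0 y0) => E; last by rewrite E eqxx.
  by rewrite E eqxx in n0.
by move/(L _ HD); rewrite inE /= (negbTE n1).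
Qed.

Lemma h_edge X k (C : {set cfun X k}) (hC : forall c, c \in C -> is_choice_fun c)
  (hCne : C != set0) (hsym : symmetric_family C) (hk2 : 2 <= k) (hkX : k < #|X|)
  (hn : 6 <= #|X|) hf (Hf : good2 C hf) x0 y0 x1 y1 :
  hf x0 y0 != x0 -> hf x1 y1 != y1 ->
  forall u v, u != v -> exists h, good2 C h /\
    forall x y, h x y = if ((x == u) && (y == v)) || ((x == v) && (y == u)) then y else x.
Proof.
move=> n0 n1 u v uv.
have only := le_only hC hCne hsym hk2 hkX hn Hf n0 n1.
pose E := At C (u, v) :|: At C (v, u).
exists (opD E); split; first by apply: inL_setU; apply: inL_At.
move=> x y; rewrite /opD.
have [<-|xy] := eqVneq x y; first by case: ifP; case: ifP.
congr (if _ then _ else _).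
apply/idP/idP.
  have vu : v != u by rewrite eq_sym.
  rewrite inE => /orP[] /At_le H.
    by have [[-> ->]|[-> ->]] := only _ _ _ _ uv xy H; rewrite !eqxx ?orbT.
  by have [[-> ->]|[-> ->]] := only _ _ _ _ vu xy H; rewrite !eqxx ?orbT.
case/orP => /andP[/eqP -> /eqP ->]; rewrite inE; apply/orP; [left|right]; apply/At_le; exact: le_refl.
Qed.

Lemma ffun2E (X : Type) (b : {ffun 'I_2 -> X}) :
  b = [ffun i => if i == ord0 then b ord0 else b (@Ordinal 2 1 isT)].
Proof.
apply/ffunP => i; rewrite ffunE; case: i => [[|[|m]] Hm] //=.
- by congr (b _); apply: val_inj.
- by congr (b _); apply: val_inj.
Qed.

Lemma rep3 (X : finType) (b : {ffun 'I_3 -> X}) (i j : 'I_3) : i != j -> b i = b j ->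
  [|| b ord0 == b (@Ordinal 3 1 isT), b ord0 == b (@Ordinal 3 2 isT) | b (@Ordinal 3 1 isT) == b (@Ordinal 3 2 isT)].
Proof.
have E0 : forall H : 0 < 3, Ordinal H = ord0 by move=> H; apply: val_inj.
have E1 : forall H : 1 < 3, Ordinal H = @Ordinal 3 1 isT by move=> H; apply: val_inj.
have E2 : forall H : 2 < 3, Ordinal H = @Ordinal 3 2 isT by move=> H; apply: val_inj.
case: i j => [[|[|[|m]]] Hi] // [[|[|[|n]]] Hj] //= _;
  rewrite ?E0 ?E1 ?E2 => ->; rewrite eqxx ?orbT //.
Qed.

Ltac simp_neq := repeat (rewrite ?eqxx /=; match goal with
 | H : is_true (?a != ?b) |- context [?a == ?b] => rewrite (negbTE H)
 | H : is_true (?a != ?b) |- context [?b == ?a] => rewrite (eq_sym b a) (negbTE H)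
 end); rewrite ?eqxx /=.

Ltac split_var x a1 a2 a3 :=
  case: (eqVneq x a1) => [->|?]; [|case: (eqVneq x a2) => [->|?]; [|case: (eqVneq x a3) => [->|?]]].

Lemma H_rep (X : eqType) (a1 a2 a3 : X) (g12 g13 : X -> X -> X)
  (h12 : a1 != a2) (h13 : a1 != a3) (h23 : a2 != a3)
  (E12 : forall x y, g12 x y = if ((x == a1) && (y == a2)) || ((x == a2) && (y == a1)) then y else x)
  (E13 : forall x y, g13 x y = if ((x == a1) && (y == a3)) || ((x == a3) && (y == a1)) then y else x)
  x y z : [|| x == y, x == z | y == z] -> g12 (g12 x y) (g13 x z) = x.
Proof.
rewrite !E12 !E13.
case/or3P => /eqP E; [rewrite -E | rewrite -E | rewrite -E];
 [split_var x a1 a2 a3; split_var z a1 a2 a3 | split_var x a1 a2 a3; split_var y a1 a2 a3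
 | split_var x a1 a2 a3; split_var y a1 a2 a3]; simp_neq.
all: by [].

Qed.

Local Close Scope group_scope.

Theorem claim13p6 (X : finType) (k : nat)
  (hX : 5 <= #|X|) (hk1 : 5 < k) (hk2 : k < #|X| - 5)
  (C : {set cfun X k})
  (hC : forall c, c \in C -> is_choice_fun c)
  (hCne : C != set0)
  (hsym : symmetric_family C)
  (hr : rF_eq C 2)
  (a1 a2 a3 : X) (h12 : a1 != a2) (h13 : a1 != a3) (h23 : a2 != a3) :
  exists g : {ffun 'I_3 -> X} -> X,
    in_F C g /\
    (forall b : {ffun 'I_3 -> X},
        (exists i j : 'I_3, i != j /\ b i = b j) -> g b = b ord0) /\
    g [ffun i : 'I_3 => nth a1 [:: a1; a2; a3] i] = a2.
Proof.
have hkk : 2 <= k by lia.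
have hkX : k < #|X| by lia.
have hn : 6 <= #|X| by lia.
case: hr => [[f [[Hf1 Hf2] Hnm]] _].
pose o1 := @Ordinal 2 1 isT.
pose hf x y := f [ffun i : 'I_2 => if i == ord0 then x else y].
have Gf : good2 C hf.
  split=> [a|c1 c2 P1 P2].
    rewrite /hf (_ : [ffun i : 'I_2 => _] = [ffun => a]) ?Hf1 //.
    by apply/ffunP => i; rewrite !ffunE; case: ifP.
  have Hcs : forall i : 'I_2, (if i == ord0 then c1 else c2) \in C by move=> i; case: (i == ord0).
  have := Hf2 _ Hcs.
  congr (_ \in C); apply/ffunP => Y; rewrite !ffunE; congr f.
  by apply/ffunP => i; rewrite !ffunE; case: ifP.
have hfE : forall b, f b = hf (b ord0) (b o1).
  by move=> b; rewrite /hf {1}(ffun2E b).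
have [x0 [y0 n0]] : exists x y, hf x y != x.
  apply: NNPP => N; apply: Hnm; exists ord0 => b; rewrite hfE.
  by apply/eqP/negPn/negP => Hb; apply: N; exists (b ord0), (b o1).
have [x1 [y1 n1]] : exists x y, hf x y != y.
  apply: NNPP => N; apply: Hnm; exists o1 => b; rewrite hfE.
  by apply/eqP/negPn/negP => Hb; apply: N; exists (b ord0), (b o1).
have [g12 [G12 E12]] := h_edge hC hCne hsym hkk hkX hn Gf n0 n1 h12.
have [g13 [G13 E13]] := h_edge hC hCne hsym hkk hkX hn Gf n0 n1 h13.
pose i1 := @Ordinal 3 1 isT; pose i2 := @Ordinal 3 2 isT.
pose H x y z := g12 (g12 x y) (g13 x z).
exists (fun b => H (b ord0) (b i1) (b i2)); split; [|split].
- split=> [a|cs Hcs].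
    by rewrite !ffunE /H G13.1 !G12.1.
  have -> : [ffun Y => H ([ffun i => cs i Y] ord0) ([ffun i => cs i Y] i1) ([ffun i => cs i Y] i2)]
     = [ffun Y => g12 ([ffun Y => g12 (cs ord0 Y) (cs i1 Y)] Y) ([ffun Y => g13 (cs ord0 Y) (cs i2 Y)] Y)].
    by apply/ffunP => Y; rewrite !ffunE.
  by apply: G12.2; [apply: G12.2|apply: G13.2].
- move=> b [i [j [ij bij]]]; have := rep3 ij bij.
  rewrite /H -/i1 -/i2.
  exact: (H_rep h12 h13 h23 E12 E13).
- rewrite /H !ffunE /= !E12 !E13.
  by simp_neq.
Qed.
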